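(* Let $\tau:\mathcal{X}\to\mathcal{X}$ be a continuous map on a sequentially compact topological space $\mathcal{X}$, let $\mathcal{F}\subseteq\mathcal{X}$ be nonempty, and let $S:\mathcal{X}\to\mathbb{R}$ be a multi-central Lyapunov function for $\tau$ around $\mathcal{F}$. Let $\mathcal{X}/\mathcal{F}$ be the quotient space obtained by collapsing $\mathcal{F}$ to a single point $[\mathcal{F}]$, with quotient map $\varphi:\mathcal{X}\to\mathcal{X}/\mathcal{F}$ and the quotient topology. Define $\tilde\tau:\mathcal{X}/\mathcal{F}\to\mathcal{X}/\mathcal{F}$ by $\tilde\tau([x])=\varphi(\tau(x))$ for $x\notin\mathcal{F}$ and $\tilde\tau([\mathcal{F}])=[\mathcal{F}]$. Then $\tilde\tau$ is mixing with fixed point $[\mathcal{F}]$, i.e. $\tilde\tau^n(y)\to[\mathcal{F}]$ for every $y\in\mathcal{X}/\mathcal{F}$.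
   Context: $\tau^n$ is the $n$-fold composition of $\tau$. A continuous map $S:\mathcal{X}\to\mathbb{R}$ is a multi-central Lyapunov function for $\tau$ around $\mathcal{F}\subseteq\mathcal{X}$ if for every $x\in\mathcal{X}$ the sequence $S(\tau^n(x))$ converges, $S$ is constant on $\mathcal{F}$, $\tau(\mathcal{F})\subseteq\mathcal{F}$, and $\lim_{n\to\infty}S(\tau^n(x))\neq S(x)$ for all $x\notin\mathcal{F}$. *)

(* Defs.v *)
From HB Require Import structures.
From mathcomp Require Import all_boot all_order all_algebra generic_quotient.
From mathcomp Require Import all_classical all_reals topology normedtype sequences.
Set Implicit Arguments. Unset Strict Implicit. Unset Printing Implicit Defensive.
Import Order.TTheory GRing.Theory Num.Theory numFieldNormedType.Exports.
Local Open Scope classical_set_scope.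
Local Open Scope ring_scope.
Local Open Scope quotient_scope.

Definition seq_compact (X : topologicalType) : Prop :=
  forall u : nat -> X, exists phi : nat -> nat,
    {homo phi : m n / (m < n)%N} /\ exists x : X, (u \o phi) @ \oo --> x.

Definition multi_central_lyapunov (R : realType) (X : topologicalType)
    (tau : X -> X) (F : set X) (S : X -> R) : Prop :=
  [/\ continuous S,
      (forall x, cvgn (fun n => S (iter n tau x))),
      (forall x y, F x -> F y -> S x = S y),
      tau @` F `<=` F &
      (forall x, ~ F x -> limn (fun n => S (iter n tau x)) <> S x)].

Section CollapseQuotient.
Variables (X : topologicalType) (F : set X).

Definition collapse_rel (x y : X) : bool :=
  (x == y) || (`[< F x >] && `[< F y >]).

Lemma collapse_rel_refl : reflexive collapse_rel.
Proof. by move=> x; rewrite /collapse_rel eqxx. Qed.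

Lemma collapse_rel_sym : symmetric collapse_rel.
Proof.
by move=> x y; rewrite /collapse_rel eq_sym andbC.
Qed.

Lemma collapse_rel_trans : transitive collapse_rel.
Proof.
move=> y x z; rewrite /collapse_rel.
case/orP=> [/eqP -> //|/andP [Fx Fy]].
case/orP=> [/eqP <-|/andP [_ Fz]]; first by rewrite Fx Fy orbT.
by rewrite Fx Fz orbT.
Qed.

Canonical collapse_equiv :=
  EquivRel collapse_rel collapse_rel_refl collapse_rel_sym collapse_rel_trans.

Definition collapse_quot := quotient_topology {eq_quot collapse_equiv}.

Definition collapse_map (x : X) : collapse_quot := \pi_collapse_quot x.

Definition collapse_tau (tau : X -> X) (q : collapse_quot) : collapse_quot :=
  if `[< F (repr q) >] then q else collapse_map (tau (repr q)).

End CollapseQuotient.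

Arguments collapse_quot {X} F.
Arguments collapse_map {X} F x.
Arguments collapse_tau {X} F tau q.

(* Main.v *)
Require Import Defs.
From HB Require Import structures.
From mathcomp Require Import all_boot all_order all_algebra generic_quotient.
From mathcomp Require Import all_classical all_reals topology normedtype sequences.
Import numFieldNormedType.Exports.
Local Open Scope classical_set_scope.
Local Open Scope ring_scope.

Lemma sub_cvg_helper (T : topologicalType) (a : nat -> T) (L : T) (m : nat -> nat) :
  a @ \oo --> L -> (forall j, (j <= m j)%N) -> (a \o m) @ \oo --> L.
Proof.
move=> ca mge; apply: (cvg_comp m a _ ca).
move=> P [N _ HN]; exists N => // j Hj; apply: HN.
exact: leq_trans Hj (mge j).
Qed.

Lemma iter_cont (X : topologicalType) (tau : X -> X) k :
  continuous tau -> continuous (iter k tau).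
Proof.
move=> ct; elim: k => [|k IH] /=; first by move=> x; exact: cvg_id.
move=> x; exact: (continuous_comp (IH x) (ct _)).
Qed.

Lemma key_lemma (R : realType) (X : topologicalType) (tau : X -> X)
    (F : set X) (S : X -> R) :
  seq_compact X -> continuous tau -> multi_central_lyapunov tau F S ->
  forall x (V : set X), (forall z, F z -> nbhs z V) -> \forall n \near \oo, V (iter n tau x).
Proof.
move=> sc ct [cS cvS _ _ lyap] x V FV.
apply: contrapT => NE.
have H N : exists n, (N <= n)%N /\ ~ V (iter n tau x).
  apply: contrapT => h; apply: NE; exists N => // n Hn.
  apply: contrapT => nV; apply: h; by exists n.
have [g Hg] := choice H.
pose w := fun j => iter (g j) tau x.
have [phi [phiinc [y cy]]] := sc w.
have phige : forall j, (j <= phi j)%N.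
  elim=> // j IH; exact: leq_ltn_trans IH (phiinc j j.+1 (ltnSn j)).
pose L := limn (fun n => S (iter n tau x)).
have cL : (fun n => S (iter n tau x)) @ \oo --> L := cvS x.
have Sk : forall k, S (iter k tau y) = L.
  move=> k.
  have c0 : (iter k tau \o (w \o phi)) @ \oo --> iter k tau y.
    apply: continuous_cvg; [exact: iter_cont | exact: cy].
  have c1 : (S \o (iter k tau \o (w \o phi))) @ \oo --> S (iter k tau y).
    apply: continuous_cvg; [exact: cS | exact: c0].
  have c2 : (S \o (iter k tau \o (w \o phi))) @ \oo --> L.
    have -> : (S \o (iter k tau \o (w \o phi))) =
              (fun n => S (iter n tau x)) \o (fun j => (k + g (phi j))%N).
      by apply: funext => j /=; rewrite /w iterD.
    apply: sub_cvg_helper cL _ => j.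
    apply: leq_trans (leq_addl k _).
    exact: leq_trans (phige j) (Hg _).1.
  exact: (cvg_unique (@Rhausdorff R) c1 c2).
have limy : limn (fun k => S (iter k tau y)) = L.
  have -> : (fun k => S (iter k tau y)) = (fun=> L) by apply: funext.
  apply: lim_cst; exact: Rhausdorff.
have Fy : F y.
  apply: contrapT => nFy; apply: (lyap y nFy); rewrite limy.
  by rewrite -(Sk 0%N).
have := cy V (FV _ Fy).
case=> N _ HN.
apply: (Hg (phi N)).2; exact: HN N (leqnn N).
Qed.

Lemma collapse_map_cont (X : topologicalType) (F : set X) :
  continuous (collapse_map F).
Proof. exact: pi_continuous. Qed.

Theorem mainTheorem6 (R : realType) (X : topologicalType) (tau : X -> X)
    (F : set X) (S : X -> R) :
  seq_compact X -> continuous tau -> F !=set0 ->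
  multi_central_lyapunov tau F S ->
  forall x0 : X, F x0 ->
    collapse_tau F tau (collapse_map F x0) = collapse_map F x0 /\
    forall y : collapse_quot F,
      (fun n => iter n (collapse_tau F tau) y) @ \oo --> collapse_map F x0.
Proof.
move=> sc ct _ Ly x0 Fx0.
have Ly' := Ly; case: Ly' => _ _ _ tauF _.
have piF z : F z -> collapse_map F z = collapse_map F x0.
  move=> Fz; apply/eqmodP; rewrite /= /collapse_rel.
  by apply/orP; right; apply/andP; split; apply/asboolP.
have reprel z : collapse_rel F (repr (collapse_map F z)) z.
  apply/eqmodP; exact: reprK.
have comm z : collapse_tau F tau (collapse_map F z) = collapse_map F (tau z).
  rewrite /collapse_tau; have := reprel z; rewrite /collapse_rel.
  case: (asboolP (F (repr (collapse_map F z)))) => Fr.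
    move=> hr; have Fz : F z.
      by move: hr; case/orP => [/eqP <- //|/andP [_ /asboolP //]].
    rewrite (piF z Fz) (piF (tau z)) //; apply: tauF; by exists z.
  by case/orP => [/eqP ->|].
have iterc n z : iter n (collapse_tau F tau) (collapse_map F z) =
                 collapse_map F (iter n tau z).
  by elim: n => //= n ->; rewrite comm.
split; first by rewrite comm (piF (tau x0)) //; apply: tauF; exists x0.
move=> y; rewrite -[y]reprK.
move=> A nA.
have H := @key_lemma R X tau F S sc ct Ly (repr y) (collapse_map F @^-1` A).
have : \forall n \near \oo, (collapse_map F @^-1` A) (iter n tau (repr y)).
  apply: H => z Fz.
  have := @collapse_map_cont X F z A; rewrite piF //; apply; exact: nA.
apply: filterS => n /= Hn.
rewrite iterc; exact: Hn.
Qed.
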